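(* Let $\hat T>0$, $\varepsilon_0\in(0,1)$ and $\hat c_0>0$ be constants, let $(x(t),y(t))$ be any trajectory of system (5), let $0\le t_0\le t_1$, and let $\mathcal V^1_F\subseteq\mathcal V_F$ be nonempty. Suppose that in the joint graph $\mathcal G([t_1,t_1+\hat T))$ there is no arc leaving from a node of $\mathcal V_F\setminus\mathcal V^1_F$ and entering a node of $\mathcal V^1_F$, and that $|x_i(t_1)|_{\mathcal L(y(t_1))}\le\varepsilon_0|x(t_0)|_{\mathcal L(y(t_0))}+\hat c_0$ for all $i\in\mathcal V^1_F$. Then for all $i\in\mathcal V^1_F$ and all $t\in[t_1,t_1+\hat T]$, $$|x_i(t)|_{\mathcal L(y(t))}\le\varepsilon_0|x(t_0)|_{\mathcal L(y(t_0))}+\hat c_0+\sqrt2\int_{t_1}^{t}|z(s)|\,ds.$$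
   Context: Standing setup. Fix integers $n\ge 2$, $k\ge 1$, $d\ge 1$. The follower set is $\mathcal V_F=\{1,\dots,n\}$ and the leader set is $\mathcal V_L=\{\hat 1,\dots,\hat k\}$ (disjoint from $\mathcal V_F$); $\mathcal V=\mathcal V_F\cup\mathcal V_L$. The interaction topology is a time-varying digraph $\mathcal G_{\sigma(t)}=(\mathcal V,\mathcal E_{\sigma(t)})$, where $\sigma:[0,\infty)\to\mathcal P$ is a piecewise constant switching signal taking values in a finite set $\mathcal P$ of digraphs on $\mathcal V$; no arc of any of these digraphs enters a leader. An arc $(j,i)$ means that $i$ receives information from $j$. Dwell-time assumption: any two consecutive switching instants of $\sigma$ are separated by at least $\tau_D>0$. For $i\in\mathcal V_F$, $N_i(\sigma(t))=\{j\in\mathcal V_F:(j,i)\in\mathcal E_{\sigma(t)}\}$ and $L_i(\sigma(t))=\{j\in\mathcal V_L:(j,i)\in\mathcal E_{\sigma(t)}\}$. For $0\le t_1<t_2\le\infty$ the joint graph is $\mathcal G([t_1,t_2))=(\mathcal V,\bigcup_{t\in[t_1,t_2)}\mathcal E_{\sigma(t)})$. System (5): $\dot y_i=u_i(y,t)$ for $i=1,\dots,k$, and $\dot x_i=\sum_{j\in N_i(\sigma(t))}a_{ij}(x,y,t)(x_j-x_i)+\sum_{j\in L_i(\sigma(t))}b_{ij}(x,y,t)(y_j-x_i)+w_i(t)$ for $i=1,\dots,n$, where $x_i,y_j\in\mathbb R^d$, $x=(x_1,\dots,x_n)$, $y=(y_1,\dots,y_k)$; each $u_i(y,t)$ is continuous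 in $y$ and piecewise continuous in $t$; each $w_i$ is continuous; the weights $a_{ij},b_{ij}$ are continuous and satisfy $a_*\le a_{ij}(x,y,t)\le a^*$, $b_{ij}(x,y,t)\ge b_*$ for all $x,y,t$, with constants $0<a_*\le a^*$, $b_*>0$. Along a trajectory, $z(t)=(u_1(y(t),t),\dots,u_k(y(t),t),w_1(t),\dots,w_n(t))\in\mathbb R^{(n+k)d}$. Set notation: $|\cdot|$ is the Euclidean norm; for a closed convex $K\subset\mathbb R^d$, $|v|_K=\inf_{p\in K}|v-p|$; $\mathcal L(y(t))=\mathrm{co}\{y_1(t),\dots,y_k(t)\}$ (convex hull); $|x(t)|_{\mathcal L(y(t))}=\max_{i\in\mathcal V_F}|x_i(t)|_{\mathcal L(y(t))}$. *)

(* Defs.v *)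
From Stdlib Require Import Reals Lra List ClassicalEpsilon.
Open Scope R_scope.

(* Vectors of R^d are functions nat -> R (only coordinates c < d       *)
(* matter).  A state of the n followers is X : nat -> nat -> R with    *)
(* X i c = c-th coordinate of x_i; similarly for the k leaders.        *)

Fixpoint fsum (m : nat) (f : nat -> R) : R :=
  match m with
  | O => 0
  | S m' => fsum m' f + f m'
  end.

(* finite max  max(f 0, ..., f (m-1)), used with m >= 1 and f >= 0 *)
Fixpoint fmax (m : nat) (f : nat -> R) : R :=
  match m with
  | O => 0
  | S m' => Rmax (fmax m' f) (f m')
  end.

Definition normd (d : nat) (v : nat -> R) : R :=
  sqrt (fsum d (fun c => (v c) ^ 2)).

Definition in_hull (k d : nat) (Y : nat -> nat -> R) (p : nat -> R) : Prop :=
  exists lam : nat -> R,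
    (forall j, (j < k)%nat -> 0 <= lam j) /\
    fsum k lam = 1 /\
    (forall c, (c < d)%nat -> p c = fsum k (fun j => lam j * Y j c)).

Definition is_inf (S : R -> Prop) (m : R) : Prop :=
  (forall r, S r -> m <= r) /\
  (forall m', (forall r, S r -> m' <= r) -> m' <= m).

Definition hull_dist (k d : nat) (Y : nat -> nat -> R) (v : nat -> R) : R :=
  epsilon (inhabits 0)
    (is_inf (fun r => exists p, in_hull k d Y p /\
                                r = normd d (fun c => v c - p c))).

Definition max_hull_dist (n k d : nat) (X Y : nat -> nat -> R) : R :=
  fmax n (fun i => hull_dist k d Y (X i)).

Definition locally_finite (E : R -> Prop) : Prop :=
  forall b, exists l : list R, forall t, E t -> 0 <= t <= b -> In t l.

Definition cont_nonneg (f : R -> R) : Prop :=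
  forall t eps, 0 <= t -> 0 < eps ->
    exists delta, 0 < delta /\
      forall s, 0 <= s -> Rabs (s - t) < delta -> Rabs (f s - f t) < eps.

Definition piecewise_cont (f : R -> R) : Prop :=
  forall b, exists l : list R,
    forall t, 0 <= t <= b -> ~ In t l -> continuity_pt f t.

Definition cont_state (n k d : nat)
  (f : (nat -> nat -> R) -> (nat -> nat -> R) -> R -> R) : Prop :=
  forall X Y t eps, 0 < eps ->
    exists delta, 0 < delta /\
      forall X' Y' t',
        Rabs (t' - t) < delta ->
        (forall i c, (i < n)%nat -> (c < d)%nat -> Rabs (X' i c - X i c) < delta) ->
        (forall j c, (j < k)%nat -> (c < d)%nat -> Rabs (Y' j c - Y j c) < delta) ->
        Rabs (f X' Y' t' - f X Y t) < eps.

Definition cont_in_y (k d : nat)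
  (f : (nat -> nat -> R) -> R -> nat -> R) : Prop :=
  forall Y t eps, 0 < eps ->
    exists delta, 0 < delta /\
      forall Y',
        (forall j c, (j < k)%nat -> (c < d)%nat -> Rabs (Y' j c - Y j c) < delta) ->
        forall c, (c < d)%nat -> Rabs (f Y' t c - f Y t c) < eps.

Definition switching_signal (p : nat) (tauD : R) (sigma : R -> nat) : Prop :=
  (forall t, 0 <= t -> (sigma t < p)%nat) /\
  exists sw : nat -> R,
    sw O = 0 /\
    (forall m, sw (S m) - sw m >= tauD) /\
    (forall m t, sw m <= t < sw (S m) -> sigma t = sigma (sw m)).

(* Digraphs of P: GF q j i = true iff arc (follower j, follower i) is   *)
(* in graph q;  GL q j i = true iff arc (leader j, follower i) is in    *)
(* graph q.  (No arc enters a leader, so these are all the arcs.)       *)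
Definition follower_rhs (n k : nat)
  (GF GL : nat -> nat -> nat -> bool) (sigma : R -> nat)
  (a : nat -> nat -> (nat -> nat -> R) -> (nat -> nat -> R) -> R -> R)
  (b : nat -> nat -> (nat -> nat -> R) -> (nat -> nat -> R) -> R -> R)
  (w : nat -> R -> nat -> R)
  (X Y : nat -> nat -> R) (t : R) (i c : nat) : R :=
  fsum n (fun j => if GF (sigma t) j i then a i j X Y t * (X j c - X i c) else 0)
  + fsum k (fun j => if GL (sigma t) j i then b i j X Y t * (Y j c - X i c) else 0)
  + w i t c.

(* (x, y) is a trajectory of system (5) on [0, infinity): continuous, and
   the differential equations hold at every t > 0 outside a locally finite
   set of exceptional times (switching instants / discontinuities in t). *)
Definition is_trajectory (n k d : nat)
  (GF GL : nat -> nat -> nat -> bool) (sigma : R -> nat)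
  (u : nat -> (nat -> nat -> R) -> R -> nat -> R)
  (a b : nat -> nat -> (nat -> nat -> R) -> (nat -> nat -> R) -> R -> R)
  (w : nat -> R -> nat -> R)
  (x y : R -> nat -> nat -> R) : Prop :=
  (forall i c, (i < n)%nat -> (c < d)%nat -> cont_nonneg (fun t => x t i c)) /\
  (forall j c, (j < k)%nat -> (c < d)%nat -> cont_nonneg (fun t => y t j c)) /\
  exists E : R -> Prop, locally_finite E /\
    forall t, 0 < t -> ~ E t ->
      (forall j c, (j < k)%nat -> (c < d)%nat ->
         derivable_pt_lim (fun s => y s j c) t (u j (y t) t c)) /\
      (forall i c, (i < n)%nat -> (c < d)%nat ->
         derivable_pt_lim (fun s => x s i c) t
           (follower_rhs n k GF GL sigma a b w (x t) (y t) t i c)).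

(* |z(s)| with z = (u_1(y,s), ..., u_k(y,s), w_1(s), ..., w_n(s)) *)
Definition z_norm (n k d : nat)
  (u : nat -> (nat -> nat -> R) -> R -> nat -> R)
  (w : nat -> R -> nat -> R) (y : R -> nat -> nat -> R) (s : R) : R :=
  sqrt (fsum k (fun j => fsum d (fun c => (u j (y s) s c) ^ 2))
        + fsum n (fun i => fsum d (fun c => (w i s c) ^ 2))).

(* Main.v *)
Require Import Defs.
From Stdlib Require Import Reals Lra Lia Psatz List ClassicalEpsilon.
Open Scope R_scope.

Lemma fsum_ext m f g : (forall i, (i < m)%nat -> f i = g i) -> fsum m f = fsum m g.
Proof. induction m; simpl; intros H; [reflexivity|]. rewrite IHm by (intros; apply H; lia). rewrite H by lia. reflexivity. Qed.

Lemma fsum_le m f g : (forall i, (i < m)%nat -> f i <= g i) -> fsum m f <= fsum m g.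
Proof. induction m; simpl; intros H; [lra|]. assert (fsum m f <= fsum m g) by (apply IHm; intros; apply H; lia). specialize (H m ltac:(lia)). lra. Qed.

Lemma fsum_add m f g : fsum m (fun i => f i + g i) = fsum m f + fsum m g.
Proof. induction m; simpl; [lra|]. rewrite IHm; lra. Qed.

Lemma fsum_scal m c f : fsum m (fun i => c * f i) = c * fsum m f.
Proof. induction m; simpl; [lra|]. rewrite IHm; lra. Qed.

Lemma fsum_const m r : fsum m (fun _ => r) = INR m * r.
Proof. induction m; simpl fsum; [simpl; lra|]. rewrite IHm, S_INR; lra. Qed.

Lemma fsum_nonneg m f : (forall i, (i < m)%nat -> 0 <= f i) -> 0 <= fsum m f.
Proof. intros H. rewrite <- (Rmult_0_r (INR m)), <- fsum_const. apply fsum_le. auto. Qed.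

Lemma fsum_term_le m f i : (forall j, (j < m)%nat -> 0 <= f j) -> (i < m)%nat -> f i <= fsum m f.
Proof. induction m; simpl; intros H Hi; [lia|].
  destruct (Nat.eq_dec i m) as [->|Hne].
  - assert (0 <= fsum m f) by (apply fsum_nonneg; intros; apply H; lia). lra.
  - assert (f i <= fsum m f) by (apply IHm; [intros; apply H; lia| lia]). specialize (H m ltac:(lia)). lra. Qed.

Lemma fsum_swap m1 m2 (f : nat -> nat -> R) :
  fsum m1 (fun i => fsum m2 (fun j => f i j)) = fsum m2 (fun j => fsum m1 (fun i => f i j)).
Proof. induction m1; simpl.
  - rewrite fsum_const; lra.
  - rewrite IHm1, <- fsum_add. reflexivity. Qed.

Lemma fsum_split n k f : fsum (n + k) f = fsum n f + fsum k (fun j => f (n + j)%nat).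
Proof. induction k; simpl. - rewrite Nat.add_0_r; lra. - rewrite Nat.add_succ_r; simpl. rewrite IHk; lra. Qed.

Lemma fsum_ind k j : (j < k)%nat -> forall Y : nat -> R,
  fsum k (fun l => (if Nat.eqb l j then 1 else 0) * Y l) = Y j.
Proof. intros Hj Y. induction k; [lia|]. simpl.
  destruct (Nat.eqb_spec k j) as [->|Hne].
  - rewrite (fsum_ext _ _ (fun _ => 0)). rewrite fsum_const; lra.
    intros i Hi. destruct (Nat.eqb_spec i j); [lia|lra].
  - rewrite IHk by lia. lra. Qed.

Lemma fmax_ge m f i : (i < m)%nat -> f i <= fmax m f.
Proof. induction m; simpl; intros Hi; [lia|].
  destruct (Nat.eq_dec i m) as [->|Hne]. apply Rmax_r.
  eapply Rle_trans; [apply IHm; lia| apply Rmax_l]. Qed.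

Lemma fmax_nonneg m f : 0 <= fmax m f.
Proof. induction m; simpl; [lra|]. eapply Rle_trans; [apply IHm|apply Rmax_l]. Qed.

Lemma fmax_le m f C : 0 <= C -> (forall i, (i < m)%nat -> f i <= C) -> fmax m f <= C.
Proof. induction m; simpl; intros HC H; [lra|]. apply Rmax_lub; [apply IHm; auto| apply H; lia]. Qed.

Lemma normd_nonneg d v : 0 <= normd d v.
Proof. apply sqrt_pos. Qed.

Lemma normd_ext d u v : (forall c, (c < d)%nat -> u c = v c) -> normd d u = normd d v.
Proof. intros H; unfold normd; f_equal; apply fsum_ext; intros; rewrite H; auto. Qed.

Lemma sq_nonneg_fsum d (v : nat -> R) : 0 <= fsum d (fun c => v c ^ 2).
Proof. apply fsum_nonneg; intros; nra. Qed.

Lemma normd_sq d v : normd d v ^ 2 = fsum d (fun c => v c ^ 2).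
Proof. unfold normd. rewrite pow2_sqrt; [auto| apply sq_nonneg_fsum]. Qed.

Lemma normd_S d v : normd (S d) v = sqrt (normd d v ^ 2 + v d ^ 2).
Proof. rewrite normd_sq. reflexivity. Qed.

Lemma mink2 A B x y : 0 <= A -> 0 <= B ->
  sqrt ((A + B)^2 + (x + y)^2) <= sqrt (A^2 + x^2) + sqrt (B^2 + y^2).
Proof. intros HA HB.
  assert (H1 := sqrt_pos (A^2+x^2)). assert (H2 := sqrt_pos (B^2+y^2)).
  rewrite <- (sqrt_pow2 (sqrt (A ^ 2 + x ^ 2) + sqrt (B ^ 2 + y ^ 2))) by lra.
  apply sqrt_le_1_alt.
  replace ((A + B)^2 + (x+y)^2) with ((A^2+x^2) + (B^2+y^2) + 2*(A*B + x*y)) by ring.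
  replace ((sqrt (A ^ 2 + x ^ 2) + sqrt (B ^ 2 + y ^ 2)) ^ 2) with
    ((A^2+x^2) + (B^2+y^2) + 2*(sqrt (A ^ 2 + x ^ 2) * sqrt (B ^ 2 + y ^ 2))).
  2:{ rewrite <- (pow2_sqrt (A^2+x^2)) at 1 by nra. rewrite <- (pow2_sqrt (B^2+y^2)) at 1 by nra. ring. }
  apply Rplus_le_compat_l. apply Rmult_le_compat_l; [lra|].
  rewrite <- sqrt_mult by nra.
  destruct (Rle_or_lt (A*B+x*y) 0). { apply Rle_trans with 0; [auto| apply sqrt_pos]. }
  rewrite <- (sqrt_pow2 (A*B+x*y)) by lra. apply sqrt_le_1_alt. assert (0 <= (A*y - B*x)^2) by apply pow2_ge_0. replace ((A*B+x*y)^2) with ((A ^ 2 + x ^ 2) * (B ^ 2 + y ^ 2) - (A*y - B*x)^2) by ring. lra.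
Qed.
Lemma normd_zero d : normd d (fun _ => 0) = 0.
Proof. unfold normd. rewrite (fsum_ext _ _ (fun _ => 0)) by (intros; ring). rewrite fsum_const, Rmult_0_r. apply sqrt_0. Qed.

Lemma normd_mink d u v : normd d (fun c => u c + v c) <= normd d u + normd d v.
Proof. induction d.
  - unfold normd; simpl. rewrite sqrt_0. lra.
  - rewrite !normd_S.
    assert (H0 := normd_nonneg d (fun c => u c + v c)).
    assert (HA := normd_nonneg d u). assert (HB := normd_nonneg d v).
    eapply Rle_trans; [|apply mink2; auto].
    apply sqrt_le_1_alt. apply Rplus_le_compat_r. apply pow_incr. lra. Qed.

Lemma normd_scal d a u : normd d (fun c => a * u c) = Rabs a * normd d u.
Proof. unfold normd. rewrite (fsum_ext _ _ (fun c => a^2 * u c ^2)) by (intros; ring).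
  rewrite fsum_scal, sqrt_mult by (try apply sq_nonneg_fsum; apply pow2_ge_0).
  rewrite <- sqrt_Rsqr_abs. unfold Rsqr. f_equal. f_equal. ring. Qed.

Lemma normd_sum d N (g : nat -> R) (u : nat -> nat -> R) :
  (forall m, (m < N)%nat -> 0 <= g m) ->
  normd d (fun c => fsum N (fun m => g m * u m c)) <= fsum N (fun m => g m * normd d (u m)).
Proof. induction N; intros Hg; simpl.
  - rewrite normd_zero; lra.
  - eapply Rle_trans; [apply normd_mink|]. rewrite normd_scal, Rabs_right by (apply Rle_ge, Hg; lia).
    assert (fsum N (fun m => g m * normd d (u m)) >= normd d (fun c => fsum N (fun m => g m * u m c))).
    { apply Rle_ge, IHN. intros; apply Hg; lia. } lra. Qed.

Lemma normd_le_sumabs d u : normd d u <= fsum d (fun c => Rabs (u c)).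
Proof. induction d.
  - unfold normd; simpl; rewrite sqrt_0; lra.
  - rewrite normd_S. simpl fsum. assert (HN := normd_nonneg d u). assert (Ha := Rabs_pos (u d)).
    apply Rle_trans with (normd d u + Rabs (u d)); [|lra].
    rewrite <- (sqrt_pow2 (normd d u + Rabs (u d))) by lra. apply sqrt_le_1_alt.
    rewrite <- (pow2_abs (u d)). nra. Qed.

Lemma normd_bound d u r : (forall c, (c < d)%nat -> Rabs (u c) <= r) -> normd d u <= INR d * r.
Proof. intros H. eapply Rle_trans; [apply normd_le_sumabs|]. rewrite <- fsum_const. apply fsum_le; auto. Qed.

Lemma normd_sym d u v : normd d (fun c => u c - v c) = normd d (fun c => v c - u c).
Proof. unfold normd. f_equal. apply fsum_ext. intros; ring. Qed.

Lemma normd_comp d u c : (c < d)%nat -> Rabs (u c) <= normd d u.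
Proof. intros Hc. unfold normd. rewrite <- sqrt_Rsqr_abs. apply sqrt_le_1_alt.
  unfold Rsqr. replace (u c * u c) with (u c ^2) by ring. apply (fsum_term_le d (fun c => u c ^ 2)); auto. intros; apply pow2_ge_0. Qed.

Definition NN (k d : nat) (Z : nat -> nat -> R) : R :=
  sqrt (fsum k (fun j => fsum d (fun c => Z j c ^ 2))).

Lemma NN_eq k d Z : NN k d Z = normd k (fun j => normd d (Z j)).
Proof. unfold NN, normd at 1. f_equal. apply fsum_ext; intros. symmetry. apply normd_sq. Qed.

Lemma NN_nonneg k d Z : 0 <= NN k d Z.
Proof. apply sqrt_pos. Qed.

Lemma NN_mink k d Z1 Z2 : NN k d (fun j c => Z1 j c + Z2 j c) <= NN k d Z1 + NN k d Z2.
Proof. rewrite !NN_eq. eapply Rle_trans; [|apply normd_mink].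
  unfold normd at 1 3. apply sqrt_le_1_alt. apply fsum_le. intros j Hj. apply pow_incr. split.
  apply normd_nonneg. apply normd_mink. Qed.

Lemma NN_scal k d a Z : NN k d (fun j c => a * Z j c) = Rabs a * NN k d Z.
Proof. rewrite !NN_eq. transitivity (normd k (fun j => Rabs a * normd d (Z j))).
  - apply normd_ext; intros; apply normd_scal.
  - rewrite normd_scal, Rabs_Rabsolu; reflexivity. Qed.

Lemma NN_comp k d Z j : (j < k)%nat -> normd d (Z j) <= NN k d Z.
Proof. intros Hj. rewrite NN_eq. eapply Rle_trans; [|apply (normd_comp k _ j Hj)]. apply Rle_abs. Qed.

Lemma NN_bound k d Z r : (forall j c, (j < k)%nat -> (c < d)%nat -> Rabs (Z j c) <= r) -> NN k d Z <= INR k * (INR d * r).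
Proof. intros H. rewrite NN_eq. apply normd_bound. intros j Hj. rewrite Rabs_right by (apply Rle_ge, normd_nonneg).
  apply normd_bound. auto. Qed.

Lemma NN_sym k d Y1 Y2 : NN k d (fun j c => Y1 j c - Y2 j c) = NN k d (fun j c => Y2 j c - Y1 j c).
Proof. unfold NN. f_equal. apply fsum_ext. intros. apply fsum_ext. intros; ring. Qed.
Lemma le_eps a b : (forall eps, 0 < eps -> a <= b + eps) -> a <= b.
Proof. intros H. destruct (Rle_or_lt a b); auto. specialize (H ((a-b)/2) ltac:(lra)). lra. Qed.

Lemma in_hull_vertex k d Y j : (j < k)%nat -> in_hull k d Y (Y j).
Proof. intros Hj. exists (fun l => if Nat.eqb l j then 1 else 0). repeat split.
  - intros l _. destruct (Nat.eqb l j); lra.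
  - rewrite (fsum_ext _ _ (fun l => (if Nat.eqb l j then 1 else 0) * (fun _ => 1) l)).
    + apply fsum_ind; auto.
    + intros; simpl; ring.
  - intros c _. symmetry. apply (fsum_ind k j Hj (fun l => Y l c)). Qed.

Section Hull.
Variables (k d : nat) (Hk : (1 <= k)%nat).

Definition hset Y v := (fun r => exists p, in_hull k d Y p /\ r = normd d (fun c => v c - p c)).

Lemma hd_spec Y v : is_inf (hset Y v) (hull_dist k d Y v).
Proof. unfold hull_dist. apply epsilon_spec.
  set (E := fun m => forall r, hset Y v r -> m <= r).
  assert (Hb : bound E).
  { exists (normd d (fun c => v c - Y 0%nat c)). intros m Hm. apply Hm.
    exists (Y 0%nat). split; auto. apply in_hull_vertex; lia. }
  assert (He : exists m, E m).
  { exists 0. intros r [p [_ ->]]. apply normd_nonneg. }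
  destruct (completeness E Hb He) as [m [Hm1 Hm2]].
  exists m. split.
  - intros r Hr. apply Hm2. intros m' Hm'. apply Hm', Hr.
  - intros m' Hm'. apply Hm1. exact Hm'. Qed.

Lemma hd_le Y v p : in_hull k d Y p -> hull_dist k d Y v <= normd d (fun c => v c - p c).
Proof. intros Hp. apply (proj1 (hd_spec Y v)). exists p; auto. Qed.

Lemma hd_nonneg Y v : 0 <= hull_dist k d Y v.
Proof. apply (proj2 (hd_spec Y v)). intros r [p [_ ->]]. apply normd_nonneg. Qed.

Lemma hd_vertex Y j : (j < k)%nat -> hull_dist k d Y (Y j) = 0.
Proof. intros Hj. apply Rle_antisym; [|apply hd_nonneg].
  eapply Rle_trans; [apply hd_le, in_hull_vertex, Hj|].
  rewrite (normd_ext _ _ (fun _ => 0)) by (intros; ring). rewrite normd_zero; lra. Qed.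

Lemma hd_near_lam Y v eps : 0 < eps -> exists lam : nat -> R,
  ((forall j, (j < k)%nat -> 0 <= lam j) /\ fsum k lam = 1) /\
  normd d (fun c => v c - fsum k (fun j => lam j * Y j c)) < hull_dist k d Y v + eps.
Proof. intros He. destruct (hd_spec Y v) as [H1 H2].
  destruct (Classical_Prop.classic (exists r, hset Y v r /\ r < hull_dist k d Y v + eps)) as [[r [[p [[lam [L1 [L2 L3]]] ->]] Hr]]|Hn].
  - exists lam. split; [split; auto|]. rewrite (normd_ext _ _ (fun c => v c - p c)); auto.
    intros c Hc; rewrite L3; auto.
  - exfalso. assert (hull_dist k d Y v + eps <= hull_dist k d Y v); [|lra].
    apply H2. intros r Hr. destruct (Rle_or_lt (hull_dist k d Y v + eps) r); auto.
    exfalso; apply Hn; eauto. Qed.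

Lemma hd_lip Y Y' v v' : hull_dist k d Y' v' <=
  hull_dist k d Y v + normd d (fun c => v' c - v c) + NN k d (fun j c => Y' j c - Y j c).
Proof. apply le_eps. intros eps He.
  destruct (hd_near_lam Y v eps He) as [lam [[L1 L2] L3]].
  set (p' := fun c => fsum k (fun j => lam j * Y' j c)).
  assert (Hp' : in_hull k d Y' p') by (exists lam; repeat split; auto).
  eapply Rle_trans; [apply (hd_le _ _ _ Hp')|].
  rewrite (normd_ext d _ (fun c => ((v' c - v c) + (v c - fsum k (fun j => lam j * Y j c)))
     + fsum k (fun j => lam j * (Y j c - Y' j c)))).
  2:{ intros c _. unfold p'. rewrite <- (Rplus_0_r (fsum k (fun j => lam j * (Y j c - Y' j c)))).
      replace (fsum k (fun j : nat => lam j * (Y j c - Y' j c)) + 0) with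
        (fsum k (fun j => lam j * Y j c + (-1) * (lam j * Y' j c))) by
        (rewrite Rplus_0_r; apply fsum_ext; intros; ring).
      rewrite fsum_add, fsum_scal. ring. }
  eapply Rle_trans; [apply normd_mink|].
  eapply Rle_trans; [apply Rplus_le_compat; [apply normd_mink| apply (normd_sum d k lam (fun j c => Y j c - Y' j c) L1)]|].
  assert (fsum k (fun m => lam m * normd d (fun c => Y m c - Y' m c)) <= NN k d (fun j c => Y' j c - Y j c)).
  { rewrite <- (Rmult_1_l (NN _ _ _)), <- L2, Rmult_comm, <- fsum_scal.
    apply fsum_le. intros j Hj. rewrite (Rmult_comm (NN _ _ _)). apply Rmult_le_compat_l; auto.
    rewrite NN_sym. apply (NN_comp k d (fun j c => Y j c - Y' j c)); auto. }
  lra. Qed.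

Lemma hd_conv Y v (q : nat -> nat -> R) (g : nat -> R) N e :
  (forall m, (m < N)%nat -> 0 <= g m) -> fsum N g <= 1 ->
  hull_dist k d Y (fun c => v c + fsum N (fun m => g m * (q m c - v c)) + e c)
  <= (1 - fsum N g) * hull_dist k d Y v + fsum N (fun m => g m * hull_dist k d Y (q m)) + normd d e.
Proof. intros Hg HG. apply le_eps. intros eps He.
  set (G := fsum N g).
  destruct (hd_near_lam Y v eps He) as [lv [[V1 V2] V3]].
  set (P := fun m (lam : nat -> R) => ((forall j, (j < k)%nat -> 0 <= lam j) /\ fsum k lam = 1) /\
        normd d (fun c => q m c - fsum k (fun j => lam j * Y j c)) < hull_dist k d Y (q m) + eps).
  set (L := fun m => epsilon (inhabits (fun _ : nat => 0)) (P m)).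
  assert (HL : forall m, P m (L m)) by (intros m; apply epsilon_spec, hd_near_lam, He).
  set (lam := fun j => (1 - G) * lv j + fsum N (fun m => g m * L m j)).
  assert (Hlam : in_hull k d Y (fun c => fsum k (fun j => lam j * Y j c))).
  { exists lam. repeat split.
    - intros j Hj. unfold lam. apply Rplus_le_le_0_compat.
      + apply Rmult_le_pos; [unfold G; lra| auto].
      + apply fsum_nonneg. intros m Hm. apply Rmult_le_pos; auto. apply (proj1 (proj1 (HL m))); auto.
    - unfold lam. rewrite fsum_add, fsum_scal, V2, fsum_swap.
      rewrite (fsum_ext N _ g). unfold G; ring.
      intros m Hm. rewrite fsum_scal, (proj2 (proj1 (HL m))). ring. }
  eapply Rle_trans; [apply (hd_le _ _ _ Hlam)|].
  rewrite (normd_ext d _ (fun c => ((1 - G) * (v c - fsum k (fun j => lv j * Y j c)) +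
       fsum N (fun m => g m * (q m c - fsum k (fun j => L m j * Y j c)))) + e c)).
  2:{ intros c _. unfold lam.
      rewrite (fsum_ext k _ (fun j => (1 - G) * (lv j * Y j c) + fsum N (fun m => g m * (L m j * Y j c)))).
      2:{ intros j _. rewrite Rmult_plus_distr_r. f_equal. ring. rewrite Rmult_comm, <- fsum_scal.
          apply fsum_ext; intros; ring. }
      rewrite fsum_add, fsum_scal, fsum_swap.
      rewrite (fsum_ext N (fun m => g m * (q m c - v c)) (fun m => g m * q m c + (- v c) * g m)) by (intros; ring).
      rewrite (fsum_ext N (fun m => g m * (q m c - fsum k (fun j => L m j * Y j c)))
          (fun m => g m * q m c + (-1) * fsum k (fun j => g m * (L m j * Y j c)))).
      2:{ intros m _. rewrite fsum_scal. ring. }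
      rewrite !fsum_add, !fsum_scal. fold G. ring. }
  eapply Rle_trans; [apply normd_mink|].
  eapply Rle_trans; [apply Rplus_le_compat_r, normd_mink|].
  rewrite normd_scal, Rabs_right by (unfold G; lra).
  assert (H2 := normd_sum d N g (fun m c => q m c - fsum k (fun j => L m j * Y j c)) Hg).
  assert (H3 : fsum N (fun m => g m * normd d (fun c => q m c - fsum k (fun j => L m j * Y j c)))
          <= fsum N (fun m => g m * hull_dist k d Y (q m)) + G * eps).
  { unfold G. rewrite (Rmult_comm (fsum N g) eps), <- fsum_scal, <- fsum_add. apply fsum_le.
    intros m Hm. rewrite (Rmult_comm eps). rewrite <- Rmult_plus_distr_l. apply Rmult_le_compat_l; auto.
    left. apply (proj2 (HL m)). }
  assert (H4 : (1 - G) * normd d (fun c => v c - fsum k (fun j => lv j * Y j c)) <=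
     (1 - G) * (hull_dist k d Y v + eps)) by (apply Rmult_le_compat_l; [unfold G; lra| lra]).
  simpl in H2. lra. Qed.
End Hull.
Definition cont_on (F : R -> R) a b := forall s, a <= s <= b -> forall eps, 0 < eps ->
  exists delta, 0 < delta /\ forall s', a <= s' <= b -> Rabs (s' - s) < delta -> Rabs (F s' - F s) < eps.

Definition dini (F : R -> R) s M := forall eps, 0 < eps ->
  exists delta, 0 < delta /\ forall h, 0 < h < delta -> F (s + h) - F s <= (M + eps) * h.

Lemma cont_on_sub F a b a' b' : a <= a' -> b' <= b -> cont_on F a b -> cont_on F a' b'.
Proof. intros H1 H2 H s Hs eps He. destruct (H s ltac:(lra) eps He) as [dl [Hd Hd']].
  exists dl; split; auto. intros s' Hs' Hss. apply Hd'; auto; lra. Qed.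

Lemma dini_mono F s M M' : M <= M' -> dini F s M -> dini F s M'.
Proof. intros HM H eps He. destruct (H eps He) as [dl [Hd Hd']]. exists dl; split; auto.
  intros h Hh. specialize (Hd' h Hh). nra. Qed.

Lemma mviA F a e eps : a <= e -> 0 < eps -> cont_on F a e ->
  (forall s, a <= s < e -> exists delta, 0 < delta /\ forall h, 0 < h < delta -> F (s + h) - F s <= eps * h) ->
  F e - F a <= eps * (e - a).
Proof. intros Hae He Hc Hd.
  set (A := fun t => a <= t <= e /\ F t - F a <= eps * (t - a)).
  assert (Hb : bound A) by (exists e; intros t [Ht _]; lra).
  assert (Ha : exists t, A t) by (exists a; split; [lra| ring_simplify; lra]).
  destruct (completeness A Hb Ha) as [sg [Hs1 Hs2]].
  assert (Has : a <= sg) by (apply Hs1; split; [lra| ring_simplify; lra]).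
  assert (Hse : sg <= e) by (apply Hs2; intros t [Ht _]; lra).
  assert (HA : F sg - F a <= eps * (sg - a)).
  { destruct (Rle_or_lt (F sg - F a) (eps * (sg - a))) as [H|H]; auto. exfalso.
    set (gap := F sg - F a - eps * (sg - a)).
    destruct (Hc sg ltac:(lra) (gap/2) ltac:(unfold gap; lra)) as [d1 [Hd1 Hd1']].
    assert (sg <= sg - d1); [|lra].
    apply Hs2. intros t [Ht Ht2].
    assert (t <= sg) by (apply Hs1; split; auto).
    destruct (Rle_or_lt t (sg - d1)); auto. exfalso.
    specialize (Hd1' t Ht ltac:(apply Rabs_def1; lra)). apply Rabs_def2 in Hd1'.
    assert (eps * (t - a) <= eps * (sg - a)) by (apply Rmult_le_compat_l; lra).
    unfold gap in *. lra. }
  destruct (Req_dec sg e) as [->|Hne]; auto.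
  destruct (Hd sg ltac:(lra)) as [dl [Hdl Hdl']].
  set (h := Rmin dl (e - sg) / 2).
  assert (Hh : 0 < h < dl /\ h <= e - sg).
  { unfold h. assert (Rmin dl (e - sg) <= dl) by apply Rmin_l. assert (Rmin dl (e - sg) <= e - sg) by apply Rmin_r.
    assert (0 < Rmin dl (e - sg)) by (apply Rmin_glb_lt; lra). lra. }
  assert (sg + h <= sg); [|lra].
  apply Hs1. split; [lra|]. specialize (Hdl' h ltac:(lra)). lra. Qed.

Lemma mvi0 F c e : c < e -> cont_on F c e ->
  (forall s, c < s < e -> dini F s 0) -> F e - F c <= 0.
Proof. intros Hce Hc Hd. rewrite <- (Rplus_0_r 0). apply le_eps. intros eta Heta.
  destruct (Hc c ltac:(lra) (eta/2) ltac:(lra)) as [dl [Hdl Hdl']].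
  set (c' := c + Rmin dl (e - c) / 2).
  assert (Hc' : c < c' <= e /\ c' - c < dl).
  { unfold c'. assert (Rmin dl (e - c) <= dl) by apply Rmin_l. assert (Rmin dl (e - c) <= e - c) by apply Rmin_r.
    assert (0 < Rmin dl (e - c)) by (apply Rmin_glb_lt; lra). lra. }
  set (ep := eta / (2 * (e - c))).
  assert (Hep : 0 < ep) by (unfold ep; apply Rdiv_lt_0_compat; lra).
  assert (H1 : F e - F c' <= ep * (e - c')).
  { apply mviA; [lra|lra| |].
    apply (cont_on_sub F c e); [lra|lra|exact Hc].
    intros s Hs. destruct (Hd s ltac:(lra) ep Hep) as [d2 [Hd2 Hd2']]. exists d2; split; auto.
    intros h Hh. specialize (Hd2' h Hh). lra. }
  assert (H2 : ep * (e - c') <= eta / 2).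
  { apply Rle_trans with (ep * (e - c)). apply Rmult_le_compat_l; lra.
    unfold ep. right. field. lra. }
  specialize (Hdl' c' ltac:(lra) ltac:(apply Rabs_def1; lra)). apply Rabs_def2 in Hdl'. lra. Qed.

Lemma mviM F M c e : c < e -> cont_on F c e ->
  (forall s, c < s < e -> dini F s M) -> F e - F c <= M * (e - c).
Proof. intros Hce Hc Hd.
  assert (H := mvi0 (fun s => F s - M * s) c e Hce).
  cut ((F e - M * e) - (F c - M * c) <= 0); [lra|]. apply H.
  - intros s Hs eps He. destruct (Hc s Hs (eps/2) ltac:(lra)) as [dl [Hdl Hdl']].
    set (dl2 := Rmin dl (eps / (2 * (Rabs M + 1)))).
    assert (HM := Rabs_pos M).
    assert (H0 : 0 < eps / (2 * (Rabs M + 1))) by (apply Rdiv_lt_0_compat; lra).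
    exists dl2. split. apply Rmin_glb_lt; lra.
    intros s' Hs' Hss. assert (Hss1 : Rabs (s' - s) < dl) by (eapply Rlt_le_trans; [apply Hss| apply Rmin_l]).
    assert (Hss2 : Rabs (s' - s) <= eps / (2 * (Rabs M + 1))) by (left; eapply Rlt_le_trans; [apply Hss| apply Rmin_r]).
    specialize (Hdl' s' Hs' Hss1).
    replace (F s' - M * s' - (F s - M * s)) with ((F s' - F s) + (- M) * (s' - s)) by ring.
    eapply Rle_lt_trans; [apply Rabs_triang|]. rewrite Rabs_mult, Rabs_Ropp.
    assert (Rabs M * Rabs (s' - s) <= Rabs M * (eps / (2 * (Rabs M + 1)))) by (apply Rmult_le_compat_l; auto).
    assert (Rabs M * (eps / (2 * (Rabs M + 1))) <= eps / 2).
    { unfold Rdiv. rewrite Rinv_mult. 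
      assert (0 < / (Rabs M + 1)) by (apply Rinv_0_lt_compat; lra).
      assert (Rabs M * / (Rabs M + 1) <= 1).
      { apply Rmult_le_reg_r with (Rabs M + 1); [lra|]. rewrite Rmult_assoc, Rinv_l by lra. lra. }
      nra. }
    lra.
  - intros s Hs eps He. destruct (Hd s Hs eps He) as [dl [Hdl Hdl']]. exists dl; split; auto.
    intros h Hh. specialize (Hdl' h Hh). lra. Qed.

Lemma mvi_list F M L : forall c e, c <= e -> cont_on F c e ->
  (forall s, c < s < e -> ~ In s L -> dini F s M) -> F e - F c <= M * (e - c).
Proof. induction L as [|p L IH]; intros c e Hce Hc Hd.
  - destruct (Req_dec c e) as [->|Hne]. lra. apply mviM; [lra|auto|]. intros s Hs; apply Hd; auto.
  - destruct (Rlt_dec c p) as [H1|H1]; [destruct (Rlt_dec p e) as [H2|H2]|].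
    + assert (F p - F c <= M * (p - c)).
      { apply IH; try lra. apply (cont_on_sub F c e); [lra|lra|exact Hc].
        intros s Hs Hn. apply Hd; [lra|]. intros [Heq|Hin]; [lra| auto]. }
      assert (F e - F p <= M * (e - p)).
      { apply IH; try lra. apply (cont_on_sub F c e); [lra|lra|exact Hc].
        intros s Hs Hn. apply Hd; [lra|]. intros [Heq|Hin]; [lra| auto]. }
      nra.
    + apply IH; auto. intros s Hs Hn. apply Hd; auto. intros [Heq|Hin]; [lra| auto].
    + apply IH; auto. intros s Hs Hn. apply Hd; auto. intros [Heq|Hin]; [lra| auto]. Qed.
Lemma step_aux F G K L (h : R -> R) b : 0 <= K -> forall l lf a,
  adapted_couple h a b l lf -> a <= b -> cont_on F a b ->
  (forall s, a < s < b -> G s <= h s) ->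
  (forall s, a < s < b -> ~ In s L -> dini F s (K * G s)) ->
  F b - F a <= K * Int_SF lf l.
Proof. intros HK l. induction l as [|r1 l1 IH]; intros lf a Had Hab Hc HG Hd.
  - destruct Had as [_ [_ [_ [Hlen _]]]]. simpl in Hlen. discriminate.
  - destruct l1 as [|r2 l'].
    + destruct Had as [_ [H0 [H1 [Hlen _]]]]. simpl in H0, H1.
      rewrite Rmin_left in H0 by lra. rewrite Rmax_right in H1 by lra.
      destruct lf; [|simpl in Hlen; discriminate]. simpl. subst. lra.
    + destruct lf as [|r3 lf'].
      { destruct Had as [_ [_ [_ [Hlen _]]]]. simpl in Hlen. discriminate. }
      assert (Had' := StepFun_P7 Hab Had).
      destruct Had as [Hord [H0 [_ [_ Hcst]]]]. simpl in H0. rewrite Rmin_left in H0 by lra. subst r1.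
      assert (Har2 : a <= r2) by (apply (Hord 0%nat); simpl; lia).
      assert (Hr2b : r2 <= b).
      { destruct Had' as [_ [H0' _]]. simpl in H0'. rewrite H0'. apply Rmin_r. }
      assert (Hc0 := Hcst 0%nat ltac:(simpl; lia)). simpl in Hc0.
      simpl Int_SF.
      assert (F r2 - F a <= (K * r3) * (r2 - a)).
      { apply (mvi_list F (K * r3) L); auto.
        apply (cont_on_sub F a b); [lra|lra|exact Hc].
        intros s Hs Hn. apply (dini_mono F s (K * G s)); [|apply Hd; auto; lra].
        apply Rmult_le_compat_l; auto. rewrite <- (Hc0 s); [apply HG; lra|]. unfold open_interval; lra. }
      assert (F b - F r2 <= K * Int_SF lf' (r2 :: l')).
      { apply IH; auto. apply (cont_on_sub F a b); [lra|lra|exact Hc].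
        intros s Hs; apply HG; lra. intros s Hs Hn; apply Hd; auto; lra. }
      lra. Qed.

Lemma step_bound F G K L a b (h : StepFun a b) : a <= b -> 0 <= K -> cont_on F a b ->
  (forall s, a < s < b -> G s <= h s) ->
  (forall s, a < s < b -> ~ In s L -> dini F s (K * G s)) ->
  F b - F a <= K * RiemannInt_SF h.
Proof. intros Hab HK Hc HG Hd. unfold RiemannInt_SF. destruct (Rle_dec a b) as [_|Hn]; [|lra].
  apply (step_aux F G K L h b HK _ _ a); auto. apply StepFun_P1. Qed.

Lemma int_bound F G K L a b (pr : Riemann_integrable G a b) : a <= b -> 0 <= K -> cont_on F a b ->
  (forall s, a < s < b -> ~ In s L -> dini F s (K * G s)) ->
  F b - F a <= K * RiemannInt pr.
Proof. intros Hab HK Hc Hd.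
  assert (Hn : forall N, F b - F a <= K * (RiemannInt_SF (phi_sequence RinvN pr N) + RinvN N)).
  { intros N. destruct (phi_sequence_prop RinvN pr N) as [psi [H1 H2]].
    set (phi := phi_sequence RinvN pr N) in *.
    eapply Rle_trans.
    - apply (step_bound F G K L a b (mkStepFun (StepFun_P28 1 phi psi))); auto.
      intros s Hs. simpl. specialize (H1 s). rewrite Rmin_left, Rmax_right in H1 by lra.
      specialize (H1 ltac:(lra)). assert (G s - phi s <= Rabs (G s - phi s)) by apply Rle_abs. lra.
    - rewrite StepFun_P30. apply Rmult_le_compat_l; auto.
      assert (RiemannInt_SF psi <= Rabs (RiemannInt_SF psi)) by apply Rle_abs. lra. }
  unfold RiemannInt. destruct (RiemannInt_exists pr RinvN RinvN_cv) as [I HI].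
  apply le_eps. intros eps He.
  set (e' := eps / (2 * (K + 1))).
  assert (He' : 0 < e') by (unfold e'; apply Rdiv_lt_0_compat; lra).
  destruct (HI e' ltac:(lra)) as [N1 HN1]. destruct (@RinvN_cv e' ltac:(lra)) as [N2 HN2].
  specialize (HN1 (max N1 N2) ltac:(lia)). specialize (HN2 (max N1 N2) ltac:(lia)).
  unfold Rdist in HN1, HN2. rewrite Rminus_0_r in HN2.
  apply Rabs_def2 in HN1. assert (HR := Rle_abs (RinvN (max N1 N2))).
  specialize (Hn (max N1 N2)).
  assert (K * (RiemannInt_SF (phi_sequence RinvN pr (max N1 N2)) + RinvN (max N1 N2)) <= K * (I + 2 * e')).
  { apply Rmult_le_compat_l; auto. lra. }
  assert (K * (2 * e') <= eps).
  { unfold e'. replace (K * (2 * (eps / (2 * (K + 1))))) with (eps * (K / (K+1))) by (field; lra).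
    assert (K / (K + 1) <= 1). { apply Rmult_le_reg_r with (K+1); [lra|]. unfold Rdiv. rewrite Rmult_assoc, Rinv_l by lra. lra. }
    nra. }
  nra. Qed.
Lemma abs_le_inv x r : Rabs x <= r -> -r <= x <= r.
Proof. unfold Rabs; destruct (Rcase_abs x); lra. Qed.

Lemma fin_delta (P : nat -> R -> Prop) N :
  (forall m dl dl', P m dl -> 0 < dl' <= dl -> P m dl') ->
  (forall m, (m < N)%nat -> exists dl, 0 < dl /\ P m dl) ->
  exists dl, 0 < dl /\ forall m, (m < N)%nat -> P m dl.
Proof. intros Hmono. induction N; intros H.
  - exists 1; split; [lra| intros; lia].
  - destruct IHN as [d1 [Hd1 H1]]. intros m Hm; apply H; lia.
    destruct (H N ltac:(lia)) as [d2 [Hd2 H2]].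
    exists (Rmin d1 d2). split. apply Rmin_glb_lt; auto.
    intros m Hm. assert (Rmin d1 d2 <= d1) by apply Rmin_l. assert (Rmin d1 d2 <= d2) by apply Rmin_r.
    destruct (Nat.eq_dec m N) as [->|Hne].
    + eapply Hmono; [apply H2| split; [apply Rmin_glb_lt|]; auto].
    + eapply Hmono; [apply H1; lia| split; [apply Rmin_glb_lt|]; auto]. Qed.

Lemma deriv_bound f s l eps : derivable_pt_lim f s l -> 0 < eps ->
  exists dl, 0 < dl /\ forall h, 0 < h < dl -> Rabs (f (s + h) - f s - h * l) <= eps * h.
Proof. intros Hf He. destruct (Hf eps He) as [dl Hdl]. exists dl. split; [apply cond_pos|].
  intros h Hh. specialize (Hdl h ltac:(lra) ltac:(rewrite Rabs_right; lra)).
  replace (f (s + h) - f s - h * l) with (h * ((f (s + h) - f s) / h - l)) by (field; lra).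
  rewrite Rabs_mult, Rabs_right by lra. rewrite Rmult_comm. apply Rmult_le_compat_r; lra. Qed.

Lemma NN_ext k d Z Z' : (forall j c, (j < k)%nat -> (c < d)%nat -> Z j c = Z' j c) -> NN k d Z = NN k d Z'.
Proof. intros H. unfold NN. f_equal. apply fsum_ext. intros j Hj. apply fsum_ext. intros c Hc. rewrite H; auto. Qed.

Lemma sum_sqrt P Q : 0 <= P -> 0 <= Q -> sqrt P + sqrt Q <= sqrt 2 * sqrt (P + Q).
Proof. intros HP HQ. rewrite <- sqrt_mult by lra.
  assert (H1 := sqrt_pos P). assert (H2 := sqrt_pos Q).
  rewrite <- (sqrt_pow2 (sqrt P + sqrt Q)) by lra. apply sqrt_le_1_alt.
  assert (0 <= (sqrt P - sqrt Q)^2) by apply pow2_ge_0.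
  assert (sqrt P ^ 2 = P) by (apply pow2_sqrt; lra). assert (sqrt Q ^ 2 = Q) by (apply pow2_sqrt; lra). nra. Qed.

Lemma fmax_diff m f g r : 0 <= r -> (forall i, (i < m)%nat -> Rabs (f i - g i) <= r) -> Rabs (fmax m f - fmax m g) <= r.
Proof. intros Hr H. assert (H1 := fmax_nonneg m f). assert (H2 := fmax_nonneg m g).
  assert (fmax m f <= fmax m g + r).
  { apply fmax_le; [lra|]. intros i Hi. specialize (H i Hi). apply abs_le_inv in H. 
    assert (g i <= fmax m g) by (apply fmax_ge; auto). lra. }
  assert (fmax m g <= fmax m f + r).
  { apply fmax_le; [lra|]. intros i Hi. specialize (H i Hi). apply abs_le_inv in H.
    assert (f i <= fmax m f) by (apply fmax_ge; auto). lra. }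
  apply Rabs_le. lra. Qed.
Theorem lemma12
  (n k d : nat) (Hn : (2 <= n)%nat) (Hk : (1 <= k)%nat) (Hd : (1 <= d)%nat)
  (* finite set P = {0,...,p-1} of digraphs, switching signal with dwell time *)
  (p : nat) (GF GL : nat -> nat -> nat -> bool)
  (tauD : R) (HtauD : 0 < tauD)
  (sigma : R -> nat) (Hsigma : switching_signal p tauD sigma)
  (* leader inputs, disturbances, weights *)
  (u : nat -> (nat -> nat -> R) -> R -> nat -> R)
  (Hu_y : forall j, (j < k)%nat -> cont_in_y k d (u j))
  (Hu_t : forall j Y c, (j < k)%nat -> (c < d)%nat ->
            piecewise_cont (fun t => u j Y t c))
  (w : nat -> R -> nat -> R)
  (Hw : forall i c, (i < n)%nat -> (c < d)%nat -> continuity (fun t => w i t c))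
  (a b : nat -> nat -> (nat -> nat -> R) -> (nat -> nat -> R) -> R -> R)
  (a_lo a_hi b_lo : R) (Ha_lo : 0 < a_lo) (Ha_lohi : a_lo <= a_hi) (Hb_lo : 0 < b_lo)
  (Ha_cont : forall i j, (i < n)%nat -> (j < n)%nat -> cont_state n k d (a i j))
  (Hb_cont : forall i j, (i < n)%nat -> (j < k)%nat -> cont_state n k d (b i j))
  (Ha_bnd : forall i j X Y t, (i < n)%nat -> (j < n)%nat ->
              a_lo <= a i j X Y t <= a_hi)
  (Hb_bnd : forall i j X Y t, (i < n)%nat -> (j < k)%nat -> b_lo <= b i j X Y t)
  (* constants *)
  (That eps0 c0 : R) (HThat : 0 < That) (Heps0 : 0 < eps0 < 1) (Hc0 : 0 < c0)
  (* trajectory *)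
  (x y : R -> nat -> nat -> R)
  (Htraj : is_trajectory n k d GF GL sigma u a b w x y)
  (t0 t1 : R) (Ht0 : 0 <= t0) (Ht01 : t0 <= t1)
  (* the nonempty follower subset V^1_F *)
  (V1 : nat -> Prop) (HV1 : forall i, V1 i -> (i < n)%nat) (HV1ne : exists i, V1 i)
  (* no arc of G([t1, t1+That)) from V_F \ V^1_F into V^1_F *)
  (Hnoarc : forall t j i, t1 <= t < t1 + That -> (j < n)%nat -> ~ V1 j -> V1 i ->
              GF (sigma t) j i = false)
  (Hinit : forall i, V1 i ->
     hull_dist k d (y t1) (x t1 i) <= eps0 * max_hull_dist n k d (x t0) (y t0) + c0) :
  forall i t, V1 i -> t1 <= t <= t1 + That ->
    forall pr : Riemann_integrable (z_norm n k d u w y) t1 t,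
      hull_dist k d (y t) (x t i)
        <= eps0 * max_hull_dist n k d (x t0) (y t0) + c0 + sqrt 2 * RiemannInt pr.
Proof.
intros i t HVi Ht pr.
destruct Htraj as [Hxc [Hyc [E [HEfin HEder]]]].
set (Mx := eps0 * max_hull_dist n k d (x t0) (y t0) + c0).
set (Vf := fun s => fmax n (fun j => if excluded_middle_informative (V1 j) then hull_dist k d (y s) (x s j) else 0)).
assert (HMx : 0 <= Mx).
{ unfold Mx, max_hull_dist. assert (H := fmax_nonneg n (fun i0 => hull_dist k d (y t0) (x t0 i0))). nra. }
assert (Hmem : forall s j, V1 j -> hull_dist k d (y s) (x s j) <= Vf s).
{ intros s j Hj. unfold Vf.
  eapply Rle_trans; [|apply (fmax_ge n (fun j => if excluded_middle_informative (V1 j) then hull_dist k d (y s) (x s j) else 0) j (HV1 j Hj))].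
  cbv beta. destruct (excluded_middle_informative (V1 j)); [lra|contradiction]. }
assert (HVpos : forall s, 0 <= Vf s) by (intros; apply fmax_nonneg).
assert (HV1le : Vf t1 <= Mx).
{ apply fmax_le; auto. intros j Hj. destruct (excluded_middle_informative (V1 j)); [apply Hinit; auto| lra]. }
assert (Hdk : 0 <= INR d) by apply pos_INR. assert (Hkk : 0 <= INR k) by apply pos_INR.
assert (HcontV : forall s, 0 <= s -> forall eps, 0 < eps -> exists dl, 0 < dl /\
   forall s', 0 <= s' -> Rabs (s' - s) < dl -> Rabs (Vf s' - Vf s) < eps).
{ intros s Hs eps He.
  set (eta := eps / (2 * (INR d + INR k * INR d + 1))).
  assert (Heta : 0 < eta) by (unfold eta; apply Rdiv_lt_0_compat; nra).
  destruct (fin_delta (fun i0 dl => forall c, (c < d)%nat -> forall s', 0 <= s' -> Rabs (s' - s) < dl ->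
      Rabs (x s' i0 c - x s i0 c) < eta) n) as [dx [Hdx Hdx']].
  { intros m dl dl' H [H1 H2] c Hc s' Hs' Hss. apply H; auto; lra. }
  { intros m Hm. apply (fin_delta (fun c dl => forall s', 0 <= s' -> Rabs (s' - s) < dl ->
      Rabs (x s' m c - x s m c) < eta) d).
    - intros c dl dl' H [H1 H2] s' Hs' Hss. apply H; auto; lra.
    - intros c Hc. destruct (Hxc m c Hm Hc s eta Hs Heta) as [dl [Hdl Hdl']]. exists dl; split; auto. }
  destruct (fin_delta (fun j0 dl => forall c, (c < d)%nat -> forall s', 0 <= s' -> Rabs (s' - s) < dl ->
      Rabs (y s' j0 c - y s j0 c) < eta) k) as [dy [Hdy Hdy']].
  { intros m dl dl' H [H1 H2] c Hc s' Hs' Hss. apply H; auto; lra. }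
  { intros m Hm. apply (fin_delta (fun c dl => forall s', 0 <= s' -> Rabs (s' - s) < dl ->
      Rabs (y s' m c - y s m c) < eta) d).
    - intros c dl dl' H [H1 H2] s' Hs' Hss. apply H; auto; lra.
    - intros c Hc. destruct (Hyc m c Hm Hc s eta Hs Heta) as [dl [Hdl Hdl']]. exists dl; split; auto. }
  exists (Rmin dx dy). split; [apply Rmin_glb_lt; auto|].
  intros s' Hs' Hss.
  assert (Hss1 : Rabs (s' - s) < dx) by (eapply Rlt_le_trans; [apply Hss| apply Rmin_l]).
  assert (Hss2 : Rabs (s' - s) < dy) by (eapply Rlt_le_trans; [apply Hss| apply Rmin_r]).
  assert (Hn1 : normd d (fun c => x s' 0%nat c - x s 0%nat c) >= 0) by (apply Rle_ge, normd_nonneg).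
  apply Rle_lt_trans with (INR d * eta + INR k * (INR d * eta)).
  2:{ apply Rle_lt_trans with (eta * (INR d + INR k * INR d + 1) - eta); [lra|].
      assert (eta * (INR d + INR k * INR d + 1) = eps / 2) by (unfold eta; field; nra). lra. }
  assert (0 <= INR d * eta) by (apply Rmult_le_pos; lra).
  assert (0 <= INR k * (INR d * eta)) by (apply Rmult_le_pos; lra).
  unfold Vf. apply fmax_diff; [lra|]. intros j Hj.
  destruct (excluded_middle_informative (V1 j)) as [HV|HV]; [|rewrite Rminus_0_r, Rabs_R0; lra].
  assert (Ha1 : normd d (fun c => x s' j c - x s j c) <= INR d * eta).
  { apply normd_bound. intros c Hc. left. apply Hdx'; auto. }
  assert (Ha2 : normd d (fun c => x s j c - x s' j c) <= INR d * eta).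
  { rewrite normd_sym. auto. }
  assert (Hb1 : NN k d (fun j c => y s' j c - y s j c) <= INR k * (INR d * eta)).
  { apply NN_bound. intros j0 c Hj0 Hc. left. apply Hdy'; auto. }
  assert (Hb2 : NN k d (fun j c => y s j c - y s' j c) <= INR k * (INR d * eta)).
  { rewrite NN_sym. auto. }
  assert (L1 := hd_lip k d Hk (y s) (y s') (x s j) (x s' j)).
  assert (L2 := hd_lip k d Hk (y s') (y s) (x s' j) (x s j)).
  apply Rabs_le. lra. }
assert (Hcont : cont_on Vf t1 t).
{ intros s Hs eps He. destruct (HcontV s ltac:(lra) eps He) as [dl [Hdl Hdl']].
  exists dl; split; auto. intros s' Hs' Hss. apply Hdl'; auto; lra. }
destruct (HEfin t) as [L HL].
assert (Hdini : forall s, t1 < s < t -> ~ In s L -> dini Vf s (sqrt 2 * z_norm n k d u w y s)).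
{ intros s Hs HnL.
  assert (HnE : ~ E s) by (intro HE; apply HnL, HL; auto; lra).
  destruct (HEder s ltac:(lra) HnE) as [HDy HDx].
  intros eps He.
  set (X := x s). set (Y := y s).
  set (coef := fun j0 m => if Nat.ltb m n then (if GF (sigma s) m j0 then a j0 m X Y s else 0)
                           else (if GL (sigma s) (m - n)%nat j0 then b j0 (m - n)%nat X Y s else 0)).
  assert (Hcoef : forall j0 m, (j0 < n)%nat -> (m < n + k)%nat -> 0 <= coef j0 m).
  { intros j0 m Hj0 Hm. unfold coef. destruct (Nat.ltb_spec m n).
    - destruct (GF (sigma s) m j0); [|lra]. destruct (Ha_bnd j0 m X Y s Hj0 H). lra.
    - destruct (GL (sigma s) (m - n)%nat j0); [|lra]. assert (HH := Hb_bnd j0 (m - n)%nat X Y s Hj0 ltac:(lia)). lra. }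
  set (Amax := fsum n (fun j0 => fsum (n + k) (coef j0))).
  assert (HA : forall j0, (j0 < n)%nat -> 0 <= fsum (n + k) (coef j0) <= Amax).
  { intros j0 Hj0. split. apply fsum_nonneg; auto.
    apply (fsum_term_le n (fun j0 => fsum (n + k) (coef j0))); auto.
    intros j1 Hj1. apply fsum_nonneg; auto. }
  assert (HAm : 0 <= Amax) by (apply fsum_nonneg; intros; apply HA; auto).
  set (eta := eps / (INR d + INR k * INR d + 1)).
  assert (Heta : 0 < eta) by (unfold eta; apply Rdiv_lt_0_compat; nra).
  destruct (fin_delta (fun j0 dl => forall c, (c < d)%nat -> forall h, 0 < h < dl ->
      Rabs (x (s + h) j0 c - x s j0 c - h * follower_rhs n k GF GL sigma a b w X Y s j0 c) <= eta * h) n) as [dx [Hdx Hdx']].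
  { intros m dl dl' H [H1 H2] c Hc h Hh. apply H; auto; lra. }
  { intros m Hm. apply (fin_delta (fun c dl => forall h, 0 < h < dl ->
      Rabs (x (s + h) m c - x s m c - h * follower_rhs n k GF GL sigma a b w X Y s m c) <= eta * h) d).
    - intros c dl dl' H [H1 H2] h Hh. apply H; auto; lra.
    - intros c Hc. apply (deriv_bound (fun r => x r m c)); auto. }
  destruct (fin_delta (fun j0 dl => forall c, (c < d)%nat -> forall h, 0 < h < dl ->
      Rabs (y (s + h) j0 c - y s j0 c - h * u j0 Y s c) <= eta * h) k) as [dy [Hdy Hdy']].
  { intros m dl dl' H [H1 H2] c Hc h Hh. apply H; auto; lra. }
  { intros m Hm. apply (fin_delta (fun c dl => forall h, 0 < h < dl ->
      Rabs (y (s + h) m c - y s m c - h * u m Y s c) <= eta * h) d).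
    - intros c dl dl' H [H1 H2] h Hh. apply H; auto; lra.
    - intros c Hc. apply (deriv_bound (fun r => y r m c)); auto. }
  set (d3 := / (Amax + 1)).
  assert (Hd3 : 0 < d3) by (unfold d3; apply Rinv_0_lt_compat; lra).
  exists (Rmin dx (Rmin dy d3)). split; [repeat apply Rmin_glb_lt; auto|].
  intros h [Hh0 Hh].
  assert (Hh1 : h < dx) by (eapply Rlt_le_trans; [apply Hh| apply Rmin_l]).
  assert (Hh2 : h < dy) by (eapply Rlt_le_trans; [apply Hh| eapply Rle_trans; [apply Rmin_r| apply Rmin_l]]).
  assert (Hh3 : h < d3) by (eapply Rlt_le_trans; [apply Hh| eapply Rle_trans; [apply Rmin_r| apply Rmin_r]]).
  set (Un := NN k d (fun j c => u j Y s c)).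
  set (Wn := NN n d (fun j c => w j s c)).
  assert (Hz : Un + Wn <= sqrt 2 * z_norm n k d u w y s).
  { unfold Un, Wn, NN, z_norm. apply sum_sqrt; apply fsum_nonneg; intros; apply sq_nonneg_fsum. }
  assert (HUn : 0 <= Un) by apply NN_nonneg. assert (HWn : 0 <= Wn) by apply NN_nonneg.
  assert (Hkey : forall j0, V1 j0 -> hull_dist k d (y (s + h)) (x (s + h) j0) <= Vf s + h * (Un + Wn) + h * eps).
  { intros j0 HV. assert (Hj0 := HV1 j0 HV).
    set (rhs := fun c => follower_rhs n k GF GL sigma a b w X Y s j0 c).
    set (q := fun m c => if Nat.ltb m n then X m c else Y (m - n)%nat c).
    set (g := fun m => h * coef j0 m).
    set (zz := fun c => X j0 c + fsum (n + k) (fun m => g m * (q m c - X j0 c)) + (fun c => h * w j0 s c) c).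
    assert (Hid : forall c, fsum (n + k) (fun m => g m * (q m c - X j0 c)) + h * w j0 s c = h * rhs c).
    { intros c. rewrite fsum_split.
      rewrite (fsum_ext n _ (fun m => h * (if GF (sigma s) m j0 then a j0 m X Y s * (X m c - X j0 c) else 0))).
      2:{ intros m Hm. unfold g, coef, q. rewrite (proj2 (Nat.ltb_lt m n) Hm). destruct (GF (sigma s) m j0); ring. }
      rewrite (fsum_ext k _ (fun m => h * (if GL (sigma s) m j0 then b j0 m X Y s * (Y m c - X j0 c) else 0))).
      2:{ intros m Hm. unfold g, coef, q. replace (Nat.ltb (n + m) n) with false by (symmetry; apply Nat.ltb_ge; lia).
          replace (n + m - n)%nat with m by lia. destruct (GL (sigma s) m j0); ring. }
      rewrite !fsum_scal. unfold rhs, follower_rhs. ring. }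
    assert (Hg : forall m, (m < n + k)%nat -> 0 <= g m) by (intros; unfold g; apply Rmult_le_pos; [lra| auto]).
    assert (HG : fsum (n + k) g <= 1).
    { unfold g. rewrite fsum_scal. destruct (HA j0 Hj0).
      assert (h * Amax <= d3 * Amax) by (apply Rmult_le_compat_r; lra).
      assert (d3 * Amax <= 1).
      { unfold d3. apply Rmult_le_reg_l with (Amax + 1); [lra|]. rewrite <- Rmult_assoc, Rinv_r by lra. lra. }
      nra. }
    assert (S1 := hd_lip k d Hk Y (y (s + h)) zz (x (s + h) j0)).
    assert (S2 : normd d (fun c => x (s + h) j0 c - zz c) <= INR d * (eta * h)).
    { apply normd_bound. intros c Hc. unfold zz. cbv beta.
      replace (x (s + h) j0 c - (X j0 c + fsum (n + k) (fun m => g m * (q m c - X j0 c)) + h * w j0 s c))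
        with (x (s + h) j0 c - x s j0 c - h * follower_rhs n k GF GL sigma a b w X Y s j0 c).
      apply Hdx'; auto; lra.
      rewrite Rplus_assoc, Hid. unfold rhs, X. ring. }
    assert (S3 : NN k d (fun j c => y (s + h) j c - Y j c) <= h * Un + INR k * (INR d * (eta * h))).
    { rewrite (NN_ext k d _ (fun j c => h * u j Y s c + (y (s + h) j c - y s j c - h * u j Y s c)))
        by (intros; unfold Y; ring).
      eapply Rle_trans; [apply NN_mink|]. rewrite NN_scal, Rabs_right by lra.
      apply Rplus_le_compat_l. apply NN_bound. intros j c Hj Hc. apply Hdy'; auto; lra. }
    assert (S4 := hd_conv k d Hk Y (X j0) q g (n + k) (fun c => h * w j0 s c) Hg HG).
    fold zz in S4.
    assert (S5 : fsum (n + k) (fun m => g m * hull_dist k d Y (q m)) <= fsum (n + k) g * Vf s).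
    { rewrite Rmult_comm, <- fsum_scal. apply fsum_le. intros m Hm. rewrite (Rmult_comm (Vf s)).
      unfold q. destruct (Nat.ltb_spec m n).
      - unfold g, coef. rewrite (proj2 (Nat.ltb_lt m n) H).
        destruct (GF (sigma s) m j0) eqn:HGF; [|lra].
        assert (HVm : V1 m).
        { destruct (Classical_Prop.classic (V1 m)) as [HH|HH]; auto.
          rewrite (Hnoarc s m j0 ltac:(lra) H HH HV) in HGF. discriminate. }
        apply Rmult_le_compat_l; [apply Rmult_le_pos; [lra| destruct (Ha_bnd j0 m X Y s Hj0 H); lra]| apply Hmem; auto].
      - rewrite hd_vertex by (auto; lia). rewrite Rmult_0_r. apply Rmult_le_pos; auto. }
    assert (S6 : normd d (fun c => h * w j0 s c) <= h * Wn).
    { rewrite normd_scal, Rabs_right by lra. apply Rmult_le_compat_l; [lra|].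
      apply (NN_comp n d (fun j c => w j s c)); auto. }
    assert (S7 : hull_dist k d Y (X j0) <= Vf s) by (apply Hmem; auto).
    assert (S8 : (1 - fsum (n + k) g) * hull_dist k d Y (X j0) <= (1 - fsum (n + k) g) * Vf s)
      by (apply Rmult_le_compat_l; lra).
    assert (S9 : INR d * (eta * h) + INR k * (INR d * (eta * h)) <= h * eps).
    { replace (INR d * (eta * h) + INR k * (INR d * (eta * h))) with (h * (eta * (INR d + INR k * INR d))) by ring.
      apply Rmult_le_compat_l; [lra|].
      assert (eta * (INR d + INR k * INR d + 1) = eps) by (unfold eta; field; nra).
      nra. }
    unfold Y in *. lra. }
  assert (HC : 0 <= Vf s + h * (sqrt 2 * z_norm n k d u w y s + eps)).
  { assert (0 <= sqrt 2 * z_norm n k d u w y s) by (apply Rmult_le_pos; apply sqrt_pos).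
    specialize (HVpos s). nra. }
  cut (Vf (s + h) <= Vf s + h * (sqrt 2 * z_norm n k d u w y s + eps)); [lra|].
  unfold Vf at 1. apply fmax_le; auto. intros j Hj.
  destruct (excluded_middle_informative (V1 j)) as [HV|HV]; [|lra].
  specialize (Hkey j HV). nra. }
assert (Hint := int_bound Vf (z_norm n k d u w y) (sqrt 2) L t1 t pr ltac:(lra) ltac:(apply sqrt_pos) Hcont Hdini).
assert (Hi := Hmem t i HVi). unfold Mx in *. lra.
Qed.
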